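(* Let $A=(a(x),dF(x))$ and $B=(b(x),dF(x))$ be games. Then $h(p)=1/\int\frac{1}{pa(x)+(1-p)b(x)}\,dF(x)$ is continuous on $[0,1]$.
   Context: A game is a pair $(a(x),dF(x))$ with $dF$ a probability measure on $\mathbb{R}$ and $a\ge0$ measurable with finite positive integral. Convention: $1/(+\infty)=0$. *)

(* Defs.v *)
From HB Require Import structures.
From mathcomp Require Import all_boot all_order all_algebra.
From mathcomp Require Import all_classical all_reals all_analysis.
Set Implicit Arguments. Unset Strict Implicit. Unset Printing Implicit Defensive.
Import Order.TTheory GRing.Theory Num.Theory.
Import numFieldNormedType.Exports.
Local Open Scope classical_set_scope.
Local Open Scope ring_scope.

Definition game (R : realType) (F : probability R R) (a : R -> R) : Prop :=
  [/\ (forall x, 0 <= a x), measurable_fun setT a &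
      (0 < \int[F]_x (a x)%:E < +oo)%E].

Definition einv (R : realType) (y : \bar R) : \bar R :=
  match y with
  | r%:E => if r == 0 then +oo%E else (r^-1)%:E
  | +oo%E => 0%E
  | -oo%E => 0%E
  end.

(* h(p) = 1 / \int 1/(p a(x) + (1-p) b(x)) dF(x), with 1/(+oo) = 0.
   The integral is always > 0 (positive integrand, probability measure),
   so h is real-valued. *)
Definition hfun (R : realType) (F : probability R R) (a b : R -> R) (p : R) : R :=
  fine (einv (\int[F]_x einv ((p * a x + (1 - p) * b x)%:E))).

(* Main.v *)
Require Import Defs.
From HB Require Import structures.
From mathcomp Require Import all_boot all_order all_algebra.
From mathcomp Require Import all_classical all_reals all_analysis.
From mathcomp Require Import ring lra.
From mathcomp Require Import measurable_realfun.
Set Implicit Arguments. Unset Strict Implicit. Unset Printing Implicit Defensive.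
Import Order.TTheory GRing.Theory Num.Theory.
Import numFieldNormedType.Exports.
Local Open Scope classical_set_scope.
Local Open Scope ring_scope.

Section Gen.
Variable R : realType.
Local Open Scope ereal_scope.

Lemma ev_gt (T : Type) (Fl : set_system T) {FF : Filter Fl} (c : T -> R) (y : \bar R) (L : R) :
  c @ Fl --> (1%R : R) -> 0 <= y -> L%:E < y -> \forall p \near Fl, L%:E < (c p)%:E * y.
Proof.
move=> hc y0 Ly.
have cpos := @cvgr_gt _ _ _ _ _ _ hc 0%R ltr01.
case: y y0 Ly => [r| |] // r0 Lr.
  have hc' : (fun p => c p * r)%R @ Fl --> r.
    have := cvgM hc (cvg_cst r); rewrite mul1r; exact.
  near=> p; rewrite -EFinM lte_fin; near: p; apply: (@cvgr_gt _ _ _ _ _ _ hc' L); by rewrite -lte_fin.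
near=> p; rewrite gt0_muley ?lte_fin ?ltry//; near: p; exact: cpos.
Unshelve. all: by end_near. Qed.

Lemma ev_lt (T : Type) (Fl : set_system T) {FF : Filter Fl} (c : T -> R) (y : \bar R) (U : R) :
  c @ Fl --> (1%R : R) -> 0 <= y -> y < U%:E -> \forall p \near Fl, (c p)%:E * y < U%:E.
Proof.
move=> hc y0 Uy.
case: y y0 Uy => [r| |] // r0 Ur.
have hc' : (fun p => c p * r)%R @ Fl --> r.
  have := cvgM hc (cvg_cst r); rewrite mul1r; exact.
near=> p; rewrite -EFinM lte_fin; near: p; apply: (@cvgr_lt _ _ _ _ _ _ hc' U); by rewrite -lte_fin.
Unshelve. all: by end_near. Qed.

Lemma h_cvg (T : Type) (Fl : set_system T) {FF : ProperFilter Fl} (I : T -> \bar R) (I0 : \bar R) :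
  0 < I0 ->
  (forall L : R, L%:E < I0 -> \forall p \near Fl, L%:E < I p) ->
  (forall U : R, I0 < U%:E -> \forall p \near Fl, I p < U%:E) ->
  (fun p => fine (einv (I p))) @ Fl --> fine (einv I0).
Proof.
case: I0 => [r0| |]// r0pos LB UB.
- have fr : (fun p => fine (I p)) @ Fl --> r0.
    apply/cvgrPdist_lt => e e0.
    have h1 := LB (r0 - e)%R; have h2 := UB (r0 + e)%R.
    have h1' : \forall p \near Fl, (r0 - e)%:E < I p by apply: LB; rewrite lte_fin; lra.
    have h2' : \forall p \near Fl, I p < (r0 + e)%:E by apply: UB; rewrite lte_fin; lra.
    near=> p.
    have hb : (r0 - e)%:E < I p by near: p.
    have ha : I p < (r0 + e)%:E by near: p.
    move: ha hb; case: (I p) => [r| |] /=; rewrite ?lte_fin ?ltNye ?ltey // => ha hb.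
    rewrite ltr_norml; apply/andP; split; lra.
  rewrite lte_fin in r0pos.
  have hv := cvgV (lt0r_neq0 r0pos) fr.
  rewrite /= (gt_eqF r0pos) /=.
  apply: cvg_trans; last exact: hv. apply: near_eq_cvg.
  have h1' : \forall p \near Fl, (r0 / 2)%:E < I p by apply: LB; rewrite lte_fin; lra.
  near=> p; rewrite /=.
  have : (r0 / 2)%:E < I p by near: p.
  case: (I p) => [r| |] /=; rewrite ?lte_fin => hr.
  - have rp : (0 < r)%R by lra.
    by rewrite /= (gt_eqF rp).
  - by rewrite invr0.
  - by [].
- apply/cvgrPdist_lt => e e0 /=.
  have h1' : \forall p \near Fl, (e^-1)%:E < I p by apply: LB; rewrite ltry.
  near=> p.
  have : (e^-1)%:E < I p by near: p.
  case: (I p) => [r| |] //=; rewrite ?lte_fin => hr.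
    have ei : (0 < e^-1)%R by rewrite invr_gt0.
    have r0 : (0 < r)%R by lra.
    rewrite (gt_eqF r0) /= sub0r normrN gtr0_norm ?invr_gt0 //.
    by rewrite -(invrK e) ltf_pV2 // posrE.
  by rewrite subrr normr0.
Unshelve. all: by end_near. Qed.
End Gen.

Section Meas.
Variable R : realType.

Lemma meas_inv : measurable_fun [set: R] (@GRing.inv R).
Proof.
have -> : [set: R] = ~` [set 0] `|` [set 0] by rewrite setvU.
apply/measurable_funU.
- by apply: measurableC.
- by [].
split; last exact: measurable_fun_set1.
apply: open_continuous_measurable_fun.
  by apply: closed_openC; exact: closed_eq.
move=> x; rewrite inE => /eqP x0; exact: inv_continuous.
Qed.

Local Open Scope ereal_scope.

Lemma meas_einv (s : R -> R) : measurable_fun [set: R] s ->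
  measurable_fun [set: R] (fun x => einv (s x)%:E).
Proof.
move=> ms.
rewrite (_ : (fun x => einv (s x)%:E) =
  fun x => if s x == 0%R then +oo else (EFin \o (@GRing.inv R) \o s) x); last first.
  by apply/funext => x.
apply: measurable_fun_ifT.
- by apply: measurable_fun_eqr => //; exact: measurable_cst.
- exact: measurable_cst.
- apply/measurable_EFinP; exact: measurableT_comp meas_inv ms.
Qed.

Lemma einv_ge0 (s : R) : (0 <= s)%R -> 0 <= einv s%:E.
Proof.
move=> s0; rewrite /einv; case: ifPn => // _.
by rewrite lee_fin invr_ge0.
Qed.

Lemma einv_le (s t c : R) : (0 <= s)%R -> (0 <= t)%R -> (0 < c)%R -> (c * t <= s)%R ->
  einv s%:E <= (c^-1)%:E * einv t%:E.
Proof.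
move=> s0 t0 c0 cts; rewrite /einv.
have [t00|t0'] := eqVneq t 0%R.
  by rewrite gt0_muley ?leey // lte_fin invr_gt0.
have tp : (0 < t)%R by rewrite lt_neqAle eq_sym t0' t0.
have sp : (0 < s)%R by apply: lt_le_trans cts; rewrite mulr_gt0.
rewrite (gt_eqF sp) -EFinM lee_fin -invfM.
by rewrite lef_pV2 ?posrE ?mulr_gt0.
Qed.

End Meas.

Section Game.
Variables (R : realType) (F : probability R R) (a b : R -> R).
Hypotheses (a0 : forall x, (0 <= a x)%R) (ma : measurable_fun setT a).
Hypotheses (b0 : forall x, (0 <= b x)%R) (mb : measurable_fun setT b).
Local Open Scope ereal_scope.

Definition comb (p : R) x := (p * a x + (1 - p) * b x)%R.
Definition G p x := einv (comb p x)%:E.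
Definition I p := \int[F]_x G p x.

Lemma comb_ge0 p x : (0 <= p <= 1)%R -> (0 <= comb p x)%R.
Proof.
move=> /andP[p0 p1]; rewrite /comb.
by apply: addr_ge0; apply: mulr_ge0 => //; rewrite subr_ge0.
Qed.

Lemma mcomb p : measurable_fun setT (comb p).
Proof.
apply: measurable_funD; apply: measurable_funM => //; exact: measurable_cst.
Qed.

Lemma mG p : measurable_fun setT (G p).
Proof. exact: meas_einv (mcomb p). Qed.

Lemma G_ge0 p x : (0 <= p <= 1)%R -> 0 <= G p x.
Proof. by move=> hp; apply: einv_ge0; apply: comb_ge0. Qed.

Lemma I_ge0 p : (0 <= p <= 1)%R -> 0 <= I p.
Proof. by move=> hp; apply: integral_ge0 => x _; apply: G_ge0. Qed.

Lemma I_le p q c : (0 <= p <= 1)%R -> (0 <= q <= 1)%R -> (0 < c)%R ->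
  (c * q <= p)%R -> (c * (1 - q) <= 1 - p)%R -> I p <= (c^-1)%:E * I q.
Proof.
move=> hp hq c0 h1 h2.
rewrite /I -(ge0_integralZl_EFin F measurableT (fun x _ => @G_ge0 q x hq) (mG q));
  last by rewrite invr_ge0 ltW.
apply: ge0_le_integral => //.
- by move=> x _; apply: G_ge0.
- exact: mG.
- apply: emeasurable_funM; [exact: measurable_cst | exact: mG].
move=> x _; apply: einv_le; rewrite ?comb_ge0 //.
rewrite /comb mulrDr !mulrA; apply: lerD; apply: ler_wpM2r => //.
Qed.

Hypotheses (ia : 0 < \int[F]_x (a x)%:E < +oo) (ib : 0 < \int[F]_x (b x)%:E < +oo).

Lemma inv_tangent (s K : R) : (0 < s)%R -> (0 < K)%R -> (2 / K <= s^-1 + s / K ^+ 2)%R.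
Proof.
move=> s0 K0; rewrite -subr_ge0.
have -> : (s^-1 + s / K ^+ 2 - 2 / K = (K - s) ^+ 2 / (s * K ^+ 2))%R.
  by field; apply/andP; split; rewrite gt_eqF.
by apply: divr_ge0; [exact: sqr_ge0 | apply: mulr_ge0; [exact: ltW | exact: sqr_ge0]].
Qed.

Lemma I_gt0 p : (0 <= p <= 1)%R -> 0 < I p.
Proof.
move=> hp; have /andP[p0 p1] := hp.
move: ia ib => /andP[ia0 iaoo] /andP[ib0 iboo].
set A := fine (\int[F]_x (a x)%:E); set B := fine (\int[F]_x (b x)%:E).
have eA : \int[F]_x (a x)%:E = A%:E by rewrite fineK // ge0_fin_numE // ltW.
have eB : \int[F]_x (b x)%:E = B%:E by rewrite fineK // ge0_fin_numE // ltW.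
have A0 : (0 < A)%R by rewrite -lte_fin -eA.
have B0 : (0 < B)%R by rewrite -lte_fin -eB.
set K := (A + B)%R.
have K0 : (0 < K)%R by rewrite addr_gt0.
have mab : measurable_fun setT (fun x => (K ^+ 2)^-1%:E * ((a x)%:E + (b x)%:E)).
  apply: emeasurable_funM; first exact: measurable_cst.
  by apply: emeasurable_funD; apply/measurable_EFinP.
have key : (2 / K)%:E <= \int[F]_x (G p x + (K ^+ 2)^-1%:E * ((a x)%:E + (b x)%:E)).
  have -> : (2 / K)%:E = \int[F]_x (cst (2 / K)%:E) x.
    rewrite integral_cst // -[LHS]mule1; congr (_ * _); symmetry; exact: probability_setT.
  apply: ge0_le_integral => //.
  - by move=> x _; rewrite lee_fin divr_ge0 // ltW.
  - by apply: emeasurable_funD => //; exact: mG.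
  move=> x _ /=; rewrite /G /einv.
  have [s0|s0] := eqVneq (comb p x) 0%R.
    by rewrite /= addye ?leey // -EFinD -EFinM.
  have sp : (0 < comb p x)%R by rewrite lt_neqAle eq_sym s0 comb_ge0.
  rewrite -EFinD lee_fin.
  apply: (le_trans (inv_tangent sp K0)); rewrite lerD2l mulrC ler_wpM2l //.
    by rewrite invr_ge0 exprn_ge0 // ltW.
  rewrite /comb; apply: lerD.
    by rewrite -[leRHS]mul1r ler_wpM2r.
  by rewrite -[leRHS]mul1r ler_wpM2r // gerBl.
rewrite ge0_integralD // in key; last 3 first.
- by move=> x _; apply: G_ge0.
- exact: mG.
- move=> x _; apply: mule_ge0; first by rewrite lee_fin invr_ge0 exprn_ge0 // ltW.
  by apply: adde_ge0; rewrite lee_fin.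
have mea : measurable_fun setT (fun x => (a x)%:E) by apply/measurable_EFinP.
have meb : measurable_fun setT (fun x => (b x)%:E) by apply/measurable_EFinP.
rewrite (@ge0_integralZl_EFin _ _ _ F _ measurableT (fun x => (a x)%:E + (b x)%:E)) in key; last 3 first.
- by move=> x _; apply: adde_ge0; rewrite lee_fin.
- exact: emeasurable_funD.
- by rewrite invr_ge0 exprn_ge0 // ltW.
rewrite (@ge0_integralD _ _ _ F _ measurableT (fun x => (a x)%:E)) // in key; last 2 first.
- by move=> x _; rewrite lee_fin.
- by move=> x _; rewrite lee_fin.
rewrite eA eB -EFinD -/K -EFinM in key.
move: key (I_ge0 hp); rewrite /I; case: (\int[F]_x G p x) => [r| |] //.
rewrite -EFinD !lee_fin lte_fin => h r0.
have : (2 / K <= r + K^-1)%R.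
  by move: h; rewrite expr2 invfM -mulrA mulVf ?gt_eqF // mulr1.
have : (0 < K^-1)%R by rewrite invr_gt0.
lra.
Qed.

Definition phi (n : nat) x : \bar R :=
  if (a x <= n%:R)%R then mine (G 0 x) (n%:R)%:E else 0.
Definition J n := \int[F]_x phi n x.

Lemma comb0 x : comb 0 x = b x.
Proof. by rewrite /comb mul0r add0r subr0 mul1r. Qed.

Lemma mphi n : measurable_fun setT (phi n).
Proof.
apply: measurable_fun_ifT.
- by apply: measurable_fun_ler => //; exact: measurable_cst.
- by apply: measurable_mine; [exact: mG | exact: measurable_cst].
- exact: measurable_cst.
Qed.

Lemma h01 : (0 <= (0:R) <= 1)%R. Proof. by rewrite lexx ler01. Qed.

Lemma phi_ge0 n x : 0 <= phi n x.
Proof.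
rewrite /phi; case: ifPn => // _.
rewrite le_min; apply/andP; split; [exact: G_ge0 h01 | by rewrite lee_fin].
Qed.

Lemma phi_le p n x : (0 <= p <= 1)%R ->
  phi n x <= ((1 + p * n%:R ^+ 2)%R)%:E * G p x.
Proof.
move=> hp; have /andP[p0 p1] := hp.
have c0 : (0 < 1 + p * n%:R ^+ 2)%R.
  have : (0 <= p * n%:R ^+ 2)%R by apply: mulr_ge0 => //; apply: exprn_ge0.
  lra.
rewrite /phi; case: ifPn => [an|_]; last first.
  by apply: mule_ge0; [rewrite lee_fin ltW | exact: G_ge0].
rewrite /G /einv; have [s0|s0] := eqVneq (comb p x) 0%R.
  by rewrite gt0_muley ?leey // lte_fin.
have sp : (0 < comb p x)%R by rewrite lt_neqAle eq_sym s0 comb_ge0.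
have sle : (comb p x <= p * n%:R + b x)%R.
  rewrite /comb; apply: lerD; first by rewrite ler_wpM2l.
  by rewrite -[leRHS]mul1r ler_wpM2r // gerBl.
have n0 : (0 <= n%:R :> R)%R by [].
rewrite -EFinM ge_min; apply/orP.
have [nb|nb] := lerP (n%:R * b x) 1%R.
  right; rewrite lee_fin ler_pdivlMr //.
  have : (n%:R * comb p x <= n%:R * (p * n%:R + b x))%R by rewrite ler_wpM2l.
  have -> : (n%:R * (p * n%:R + b x) = p * n%:R ^+ 2 + n%:R * b x)%R.
    by rewrite mulrDr expr2; ring.
  by move=> h; apply: (le_trans h); lra.
left; rewrite comb0.
have bp : (0 < b x)%R.
  rewrite lt_neqAle eq_sym b0 andbT; apply/eqP => b00.
  by move: nb; rewrite b00 mulr0 ltr10.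
rewrite (gt_eqF bp) lee_fin ler_pdivlMr // mulrC.
rewrite ler_pdivrMr //.
apply: (le_trans sle).
have : (p * n%:R <= p * n%:R * (n%:R * b x))%R.
  by rewrite -[leLHS]mulr1 ler_wpM2l ?mulr_ge0 // ltW.
have -> : ((1 + p * n%:R ^+ 2) * b x = p * n%:R * (n%:R * b x) + b x)%R.
  by rewrite expr2; ring.
by move=> h; rewrite lerD2r.
Qed.

Lemma J_le p n : (0 <= p <= 1)%R -> J n <= ((1 + p * n%:R ^+ 2)%R)%:E * I p.
Proof.
move=> hp; have /andP[p0 p1] := hp.
rewrite /J /I -(ge0_integralZl_EFin F measurableT (fun x _ => @G_ge0 p x hp) (mG p)).
  apply: ge0_le_integral => //.
  - by move=> x _; apply: phi_ge0.
  - exact: mphi.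
  - apply: emeasurable_funM; [exact: measurable_cst | exact: mG].
  by move=> x _; apply: phi_le.
have : (0 <= p * n%:R ^+ 2)%R by apply: mulr_ge0 => //; apply: exprn_ge0.
lra.
Qed.

Lemma nd_phi x : nondecreasing_seq (phi ^~ x).
Proof.
move=> m n mn; rewrite /phi; case: ifPn => am; last exact: phi_ge0.
have an : (a x <= n%:R)%R by apply: (le_trans am); rewrite ler_nat.
rewrite an le_min; apply/andP; split; rewrite ge_min; apply/orP.
  by left.
by right; rewrite lee_fin ler_nat.
Qed.

Lemma cvg_phi x : phi ^~ x @ \oo --> G 0 x.
Proof.
have := G_ge0 x h01.
case eq : (G 0 x) => [r| |] // r0.
- apply: cvg_near_cst; near=> n.
  rewrite /phi ifT; last by near: n; exact: nbhs_infty_ger.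
  rewrite eq min_l // lee_fin; near: n; exact: nbhs_infty_ger.
- have h : (fun n : nat => (n%:R : R)%:E) @ \oo --> +oo by apply/cvgenyP.
  apply: cvg_trans h; apply: near_eq_cvg; near=> n.
  rewrite /phi ifT; last by near: n; exact: nbhs_infty_ger.
  by rewrite eq min_r // leey.
Unshelve. all: by end_near. Qed.

Lemma J_sup : I 0 = ereal_sup (range J).
Proof.
have mc := monotone_convergence F measurableT mphi (fun n x _ => phi_ge0 n x)
  (fun x _ => nd_phi x).
have ndJ : nondecreasing_seq J.
  move=> m n mn; apply: ge0_le_integral => //.
  - by move=> x _; apply: phi_ge0.
  - exact: mphi.
  - exact: mphi.
  by move=> x _; apply: nd_phi.
rewrite /I (eq_integral (fun x => limn (phi ^~ x))); last first.
  by move=> x _; apply/esym/cvg_lim => //; exact: cvg_phi.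
rewrite mc; apply: cvg_lim => //; exact: ereal_nondecreasing_cvgn.
Qed.

End Game.

Section Aux.
Variable R : realType.

Lemma le_mulV (c : R) (y z : \bar R) : 0 < c -> (y <= (c^-1)%:E * z)%E -> (c%:E * y <= z)%E.
Proof.
move=> c0 h.
have : (c%:E * y <= c%:E * ((c^-1)%:E * z))%E by apply: lee_wpmul2l => //; rewrite lee_fin ltW.
by rewrite muleA -EFinM mulfV ?gt_eqF // mul1e.
Qed.

Lemma le_mulV' (c : R) (y z : \bar R) : 0 < c -> (y <= c%:E * z)%E -> ((c^-1)%:E * y <= z)%E.
Proof. by move=> c0 h; apply: le_mulV; rewrite ?invr_gt0 // invrK. Qed.

Lemma coef_ok (p q m : R) : 0 < m -> m <= q -> m <= 1 - q -> `|p - q| < m ->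
  [/\ 0 < 1 - `|p - q| / m, (1 - `|p - q| / m) * q <= p &
      (1 - `|p - q| / m) * (1 - q) <= 1 - p].
Proof.
move=> m0 mq mq' pq.
set d := `|p - q| / m.
have d0 : 0 <= d by rewrite divr_ge0 // ltW.
have d1 : d < 1 by rewrite ltr_pdivrMr // mul1r.
have dm : d * m = `|p - q| by rewrite /d divfK // gt_eqF.
have h1 : d * m <= d * q by rewrite ler_wpM2l.
have h2 : d * m <= d * (1 - q) by rewrite ler_wpM2l.
have h3 : 0 <= d * q by rewrite mulr_ge0 // ltW // (lt_le_trans m0).
have h4 : 0 <= d * (1 - q) by rewrite mulr_ge0 // ltW // (lt_le_trans m0).
split; first lra.
- case: (lerP p q) => pq'.
    have : `|p - q| = q - p by rewrite ler0_norm ?opprB // subr_le0.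
    lra.
  have : `|p - q| = p - q by rewrite gtr0_norm // subr_gt0.
  lra.
- case: (lerP p q) => pq'.
    have : `|p - q| = q - p by rewrite ler0_norm ?opprB // subr_le0.
    lra.
  have : `|p - q| = p - q by rewrite gtr0_norm // subr_gt0.
  lra.
Qed.

Lemma I_swap (F : probability R R) (a b : R -> R) p : I F a b p = I F b a (1 - p).
Proof.
rewrite /I; apply: eq_integral => x _; rewrite /G /comb.
congr (einv _%:E); ring.
Qed.

End Aux.

Unset Implicit Arguments.

Theorem lemmaD12 (R : realType) (F : probability R R) (a b : R -> R) :
  game F a -> game F b ->
  {within `[0, 1], continuous (hfun F a b)}.
Proof.
move=> [a0 ma ia] [b0 mb ib].
have Ige0 p : (0 <= p <= 1) -> (0 <= I F a b p)%E by move=> hp; exact: I_ge0.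
apply/continuous_within_itvP; first exact: ltr01.
split.
- move=> p0; rewrite in_itv /= => /andP[p00 p01].
  set m := Num.min p0 (1 - p0) / 2.
  have hmin1 : Num.min p0 (1 - p0) <= p0 by rewrite ge_min lexx.
  have hmin2 : Num.min p0 (1 - p0) <= 1 - p0 by rewrite ge_min lexx orbT.
  have hmin0 : 0 < Num.min p0 (1 - p0) by rewrite lt_min p00 subr_gt0.
  have m0 : 0 < m by rewrite divr_gt0.
  have hm1 : 2 * m <= p0 by rewrite /m mulrC divfK // pnatr_eq0.
  have hm2 : 2 * m <= 1 - p0 by rewrite /m mulrC divfK // pnatr_eq0.
  set c := fun p => 1 - `|p - p0| / m.
  have hc : c @ p0 --> (1 : R).
    have := cvgB (cvg_cst (1 : R))
      (cvgM (cvg_norm (cvgB (@cvg_id _ (nbhs p0)) (cvg_cst p0))) (cvg_cst m^-1)).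
    rewrite subrr normr0 mul0r subr0; apply; exact: nbhs_filter.
  have hcV : (fun p => (c p)^-1) @ p0 --> (1 : R).
    have := cvgV (oner_neq0 R) hc; rewrite invr1; apply; exact: nbhs_filter.
  have near_p : \forall p \near p0, `|p - p0| < m.
    near=> p; have : 0 < c p by near: p; exact: (@cvgr_gt _ _ _ _ _ _ hc 0 ltr01).
    by rewrite /c subr_gt0 ltr_pdivrMr // mul1r.
  apply: (@h_cvg R R (nbhs p0) _ (I F a b) (I F a b p0)).
  + by apply: I_gt0 => //; rewrite !ltW.
  + move=> L hL.
    have hg := ev_gt hc (Ige0 p0 _) hL.
    near=> p.
    have hp : `|p - p0| < m by near: p.
    have hp01 : 0 <= p <= 1.
      move: hp; rewrite ltr_norml => /andP[]; lra.
    apply: (lt_le_trans (_ : L%:E < (c p)%:E * I F a b p0)%E).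
      by near: p; apply: hg; rewrite !ltW.
    have [hpa hpb] : -m < p - p0 /\ p - p0 < m by move: hp; rewrite ltr_norml => /andP[? ?]; split.
    have hpm : m <= p by lra.
    have hpm' : m <= 1 - p by lra.
    have hp0 : `|p0 - p| < m by rewrite distrC.
    have [k0 k1 k2] := coef_ok (p := p0) m0 hpm hpm' hp0.
    apply: le_mulV; first by rewrite /c distrC.
    rewrite /c distrC; apply: I_le => //.
    by rewrite !ltW.
  + move=> U hU.
    have hg := ev_lt hcV (Ige0 p0 _) hU.
    near=> p.
    have hp : `|p - p0| < m by near: p.
    apply: (le_lt_trans (_ : I F a b p <= ((c p)^-1)%:E * I F a b p0)%E).
      have [hpa hpb] : -m < p - p0 /\ p - p0 < m by move: hp; rewrite ltr_norml => /andP[? ?]; split.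
      have hpm : m <= p0 by lra.
      have hpm' : m <= 1 - p0 by lra.
      have [k0 k1 k2] := coef_ok (p := p) m0 hpm hpm' hp.
      apply: I_le => //; last by rewrite !ltW.
      apply/andP; split; lra.
    by near: p; apply: hg; rewrite !ltW.
- apply: (@h_cvg R R (0^'+) _ (I F a b) (I F a b 0)).
  + by apply: I_gt0 => //; rewrite lexx ler01.
  + move=> L; rewrite {1}(J_sup F a0 ma b0 mb) => /ereal_sup_gt [_ [n _ <-] hn].
    set k : R := n%:R ^+ 2.
    have hc : (fun p => (1 + p * k)^-1) @ 0^'+ --> (1 : R).
      apply: cvg_at_right_filter.
      have h1 : (fun p => 1 + p * k) @ (0:R) --> (1:R).
        have := cvgD (cvg_cst (1 : R)) (cvgM (@cvg_id _ (nbhs (0:R))) (cvg_cst k)).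
        rewrite mul0r addr0; apply; exact: nbhs_filter.
      have := cvgV (oner_neq0 R) h1; rewrite invr1; apply; exact: nbhs_filter.
    have J0 : (0 <= J F a b n)%E by apply: integral_ge0 => x _; exact: phi_ge0.
    have hg := @ev_gt R R (0^'+) (at_right_proper_filter 0) _ _ _ hc J0 hn.
    near=> p.
    have hp0 : 0 < p by near: p; exact: nbhs_right_gt.
    have hp1 : p < 1 by near: p; exact: nbhs_right_lt.
    apply: (lt_le_trans (_ : L%:E < ((1 + p * k)^-1)%:E * J F a b n)%E).
      by near: p; exact: hg.
    apply: le_mulV'.
      have : 0 <= p * k by apply: mulr_ge0; [exact: ltW | exact: sqr_ge0].
      lra.
    by apply: J_le => //; rewrite !ltW.
  + move=> U hU.
    have hc : (fun p => (1 - p)^-1) @ 0^'+ --> (1 : R).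
      apply: cvg_at_right_filter.
      have h1 : (fun p => 1 - p) @ (0:R) --> (1:R).
        have := cvgB (cvg_cst (1 : R)) (@cvg_id _ (nbhs (0:R))).
        rewrite subr0; apply; exact: nbhs_filter.
      have := cvgV (oner_neq0 R) h1; rewrite invr1; apply; exact: nbhs_filter.
    have h00 : 0 <= (0:R) <= 1 by rewrite lexx ler01.
    have hg := @ev_lt R R (0^'+) (at_right_proper_filter 0) _ _ _ hc (Ige0 0 h00) hU.
    near=> p.
    have hp0 : 0 < p by near: p; exact: nbhs_right_gt.
    have hp1 : p < 1 by near: p; exact: nbhs_right_lt.
    apply: (le_lt_trans (_ : I F a b p <= ((1 - p)^-1)%:E * I F a b 0)%E).
      apply: I_le => //; rewrite ?subr0 ?mulr0 ?mulr1 ?lexx ?ler01 //; try (apply/andP; split); lra.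
    by near: p; exact: hg.
- apply: (@h_cvg R R (1^'-) _ (I F a b) (I F a b 1)).
  + by apply: I_gt0 => //; rewrite lexx ler01.
  + move=> L; rewrite {1}I_swap subrr (J_sup F b0 mb a0 ma).
    move=> /ereal_sup_gt [_ [n _ <-] hn].
    set k : R := n%:R ^+ 2.
    have hc : (fun p => (1 + (1 - p) * k)^-1) @ 1^'- --> (1 : R).
      apply: cvg_at_left_filter.
      have h1 : (fun p => 1 + (1 - p) * k) @ (1:R) --> (1:R).
        have := cvgD (cvg_cst (1 : R)) (cvgM (cvgB (cvg_cst (1:R)) (@cvg_id _ (nbhs (1:R)))) (cvg_cst k)).
        rewrite subrr mul0r addr0; apply; exact: nbhs_filter.
      have := cvgV (oner_neq0 R) h1; rewrite invr1; apply; exact: nbhs_filter.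
    have J0 : (0 <= J F b a n)%E by apply: integral_ge0 => x _; exact: phi_ge0.
    have hg := @ev_gt R R (1^'-) (at_left_proper_filter 1) _ _ _ hc J0 hn.
    near=> p.
    have hp0 : 0 < p by near: p; exact: nbhs_left_gt.
    have hp1 : p < 1 by near: p; exact: nbhs_left_lt.
    apply: (lt_le_trans (_ : L%:E < ((1 + (1 - p) * k)^-1)%:E * J F b a n)%E).
      by near: p; exact: hg.
    apply: le_mulV'.
      have : 0 <= (1 - p) * k by apply: mulr_ge0; [rewrite subr_ge0 ltW | exact: sqr_ge0].
      lra.
    rewrite I_swap; apply: J_le => //; apply/andP; split; lra.
  + move=> U hU.
    have hc : (fun p => p^-1) @ 1^'- --> (1 : R).
      apply: cvg_at_left_filter.
      have := cvgV (oner_neq0 R) (@cvg_id _ (nbhs (1:R))); rewrite invr1; apply; exact: nbhs_filter.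
    have h11 : 0 <= (1:R) <= 1 by rewrite lexx ler01.
    have hg := @ev_lt R R (1^'-) (at_left_proper_filter 1) _ _ _ hc (Ige0 1 h11) hU.
    near=> p.
    have hp0 : 0 < p by near: p; exact: nbhs_left_gt.
    have hp1 : p < 1 by near: p; exact: nbhs_left_lt.
    apply: (le_lt_trans (_ : I F a b p <= (p^-1)%:E * I F a b 1)%E).
      apply: I_le => //; rewrite ?subrr ?mulr0 ?mulr1 ?lexx ?ler01 //; try (apply/andP; split); lra.
    by near: p; exact: hg.
Unshelve. all: by end_near. Qed.
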